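(* Fix $C<1$ and let $\delta=\delta(C)=C-1-\log C>0$. Fix $M>\frac{1}{\delta}$ and fix $\theta<\min(M\delta-1,1)$. Then there is a positive constant $L_1$ such that \[ \mathbb{P}\Big(\bigcap_{1\le j\le n}\{\#\mathcal{E}_j\le M\log n\}\Big)\ \ge\ 1-\frac{1}{n^{\theta}} \] for all $n\ge L_1$.
   Context: Let $C>0$ be a constant and $(\alpha_n)_{n\ge1}$ a sequence of nonnegative reals with $\alpha_n\to0$. For each $n$, consider the complete graph $K_n$ on vertex set $\{1,\dots,n\}$; each edge $e$ of $K_n$ is independently open with probability $p_n(e)$ and closed otherwise, where $\frac{C-\alpha_n}{n}\le p_n(e)\le\frac{C+\alpha_n}{n}$ for every edge $e$. Let $G$ be the resulting random graph of open edges, with probability measure $\mathbb{P}$. For a vertex $i$, $\mathcal{E}_i$ denotes the open component of $G$ containing $i$ (the set of vertices joined to $i$ by a path of open edges, together with $i$ itself), and $\#\mathcal{E}_i$ its number of vertices. $\log$ is the natural logarithm. *)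

(* Defs.v *)
From HB Require Import structures.
From mathcomp Require Import all_boot all_order all_algebra.
From mathcomp Require Import all_classical all_reals all_analysis.
Set Implicit Arguments. Unset Strict Implicit. Unset Printing Implicit Defensive.
Import Order.TTheory GRing.Theory Num.Theory.
Local Open Scope ring_scope.

(* Edges of the complete graph K_n on 'I_n: unordered pairs {i,j}, i <> j,
   represented canonically as pairs (i, j) with i < j. *)
Definition edge (n : nat) := {e : 'I_n * 'I_n | (e.1 < e.2)%N}.

(* An edge configuration: omega e = true iff edge e is open. *)
Definition config (n : nat) := {ffun edge n -> bool}.

Definition adj (n : nat) (w : config n) : rel 'I_n :=
  fun i j => [exists e : edge n,
    w e && ((((val e).1 == i) && ((val e).2 == j)) ||
            (((val e).1 == j) && ((val e).2 == i)))].

Definition open_cluster (n : nat) (w : config n) (i : 'I_n) : {set 'I_n} :=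
  [set j | connect (adj w) i j].

Definition weight (R : realType) (n : nat) (p : edge n -> R) (w : config n) : R :=
  \prod_(e : edge n) (if w e then p e else 1 - p e).

Definition Prob (R : realType) (n : nat) (p : edge n -> R) (A : pred (config n)) : R :=
  \sum_(w : config n | A w) weight p w.

(* Main.v *)
Require Import Defs.
From HB Require Import structures.
From mathcomp Require Import all_boot all_order all_algebra.
From mathcomp Require Import all_classical all_reals all_analysis.
From mathcomp Require Import zify ring lra.
Import Order.TTheory GRing.Theory Num.Theory.
Local Open Scope ring_scope.

Module Aux.
Set Implicit Arguments. Unset Strict Implicit.

Section Exp.
Variables (R : realType) (n : nat) (p : edge n -> R).
Hypothesis Hp : forall e, 0 <= p e <= 1.

Definition rho (e : edge n) (b : bool) : R := if b then p e else 1 - p e.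

Definition Exp (f : config n -> R) : R := \sum_w weight p w * f w.

Lemma weight_ge0 w : 0 <= weight p w.
Proof.
rewrite /weight; apply: prodr_ge0 => e _.
by case: (w e); have /andP[h1 h2] := Hp e; rewrite ?subr_ge0.
Qed.

Lemma Exp_prod (phi : edge n -> bool -> R) :
  Exp (fun w => \prod_e phi e (w e)) =
  \prod_e (p e * phi e true + (1 - p e) * phi e false).
Proof.
rewrite /Exp /weight.
transitivity (\sum_(w : config n) \prod_e ((if w e then p e else 1 - p e) * phi e (w e))).
  by apply: eq_bigr => w _; rewrite -big_split.
rewrite -(bigA_distr_bigA (fun e b => (if b then p e else 1 - p e) * phi e b)).
by apply: eq_bigr => e _; rewrite big_bool /= addrC.
Qed.

Lemma Exp1 : Exp (fun _ => 1) = 1.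
Proof.
have := Exp_prod (fun _ _ => 1).
rewrite big1 ?mulr1 => [->|w _]; last by [].
by rewrite big1 // => e _; rewrite !mulr1 addrC subrK.
Qed.

Lemma Exp_ge0 f : (forall w, 0 <= f w) -> 0 <= Exp f.
Proof. by move=> h; apply: sumr_ge0 => w _; rewrite mulr_ge0 ?weight_ge0. Qed.

Lemma ler_Exp f g : (forall w, f w <= g w) -> Exp f <= Exp g.
Proof. by move=> h; apply: ler_sum => w _; rewrite ler_wpM2l ?weight_ge0. Qed.

Lemma ExpZ c f : Exp (fun w => c * f w) = c * Exp f.
Proof. by rewrite /Exp mulr_sumr; apply: eq_bigr => w _; rewrite mulrCA. Qed.

Lemma ExpD f g : Exp (fun w => f w + g w) = Exp f + Exp g.
Proof. by rewrite /Exp -big_split; apply: eq_bigr => w _; rewrite mulrDr. Qed.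

Lemma Exp_sum (I : finType) (F : I -> config n -> R) :
  Exp (fun w => \sum_i F i w) = \sum_i Exp (F i).
Proof.
rewrite /Exp exchange_big /=; apply: eq_bigr => w _; by rewrite mulr_sumr.
Qed.

Definition mrg (D : pred (edge n)) (w1 w2 : config n) : config n :=
  [ffun e => if D e then w1 e else w2 e].

Lemma Exp_indep (D : pred (edge n)) (f g : config n -> R) :
  (forall w w' : config n, (forall e, D e -> w e = w' e) -> f w = f w') ->
  (forall w w' : config n, (forall e, ~~ D e -> w e = w' e) -> g w = g w') ->
  Exp (fun w => f w * g w) = Exp f * Exp g.
Proof.
move=> hf hg.
pose sig (x : config n * config n) := (mrg D x.1 x.2, mrg D x.2 x.1).
have sigK : involutive sig.
  move=> [w1 w2]; rewrite /sig /mrg /=; congr pair; apply/ffunP => e;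
  by rewrite !ffunE; case: (D e).
have Hw : forall w1 w2, weight p w1 * weight p w2 =
    weight p (mrg D w1 w2) * weight p (mrg D w2 w1).
  move=> w1 w2; rewrite /weight -!big_split /=; apply: eq_bigr => e _.
  by rewrite /mrg !ffunE; case: (D e) => //; rewrite mulrC.
have E1 : Exp f * Exp g = \sum_(x : config n * config n)
   weight p x.1 * weight p x.2 * (f x.1 * g x.2).
  rewrite -(pair_bigA _ (fun w1 w2 => weight p w1 * weight p w2 * (f w1 * g w2))).
  rewrite /Exp mulr_suml; apply: eq_bigr => w1 _.
  rewrite mulr_sumr; apply: eq_bigr => w2 _.
  by rewrite mulrACA.
have E2 : Exp (fun w => f w * g w) = \sum_(x : config n * config n)
   weight p x.1 * weight p x.2 * (f x.1 * g x.1).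
  rewrite -(pair_bigA _ (fun w1 w2 => weight p w1 * weight p w2 * (f w1 * g w1))).
  rewrite -[LHS]mulr1 -Exp1 /Exp mulr_suml; apply: eq_bigr => w1 _.
  rewrite mulr_sumr; apply: eq_bigr => w2 _.
  by rewrite mulr1 mulrAC.
rewrite E2; apply: esym; rewrite E1 (reindex_inj (inv_inj sigK)) /=; apply: esym.
apply: eq_bigr => -[w1 w2] _ /=.
rewrite -Hw.
rewrite (hf (mrg D w1 w2) w1); last by move=> e De; rewrite /mrg ffunE De.
by rewrite (hg (mrg D w2 w1) w1) //; move=> e De; rewrite /mrg ffunE (negbTE De).
Qed.

End Exp.


Lemma path_closure (T : finType) (e : rel T) (P : pred T) x y :
  (forall z, e x z -> P z) -> (forall z z', P z -> e z z' -> P z') ->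
  connect e x y -> y = x \/ P y.
Proof.
move=> h1 h2 /connectP [[|z q]] /=; first by move=> _ ->; left.
move=> /andP[exz pth] ->; right.
have : P z by apply: h1.
elim: q z pth {exz} => [|z' q IH] z /= ; first by [].
by move=> /andP[ez pth] Pz; apply: IH pth _; apply: h2 Pz ez.
Qed.

Section Graph.
Variables (n : nat).
Implicit Types (w : config n) (A U : {set 'I_n}).

Definition Nb w a U := [set u in U | adj w a u].
Definition rAU w A U : rel 'I_n := fun x y => (x \in A :|: U) && (y \in U) && adj w x y.
Definition Fr w A U := [set u in U | [exists b in A, connect (rAU w A U) b u]].

Lemma Nb_sub w a U : Nb w a U \subset U.
Proof. by apply/fintype.subsetP => u; rewrite inE => /andP[]. Qed.

Lemma Fr_sub w A U : Fr w A U \subset U.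
Proof. by apply/fintype.subsetP => u; rewrite inE => /andP[]. Qed.

Lemma Fr_split w a A U : a \in A -> [disjoint A & U] ->
  Fr w A U = Nb w a U :|: Fr w (A :\ a :|: Nb w a U) (U :\: Nb w a U).
Proof.
move=> aA dAU.
set N := Nb w a U; set A' := A :\ a :|: N; set U' := U :\: N.
have sub_r : subrel (rAU w A' U') (rAU w A U).
  move=> x y /andP[/andP[hx hy] hadj]; rewrite /rAU hadj andbT.
  move: hx hy; rewrite !inE => hx /andP[_ ->]; rewrite andbT.
  case/orP: hx => [/orP[/andP[_ ->]//|]|/andP[_ ->]]; last by rewrite orbT.
  by rewrite /N ?inE => /andP[-> _]; rewrite orbT.
apply/setP => u; apply/idP/idP.
- rewrite inE => /andP[uU /exists_inP[b bA cb]].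
  have ub : u <> b.
    by move=> ub; move: dAU => /disjointFr /(_ bA); rewrite -ub uU.
  pose P := [pred z | (z \in N) || (z \in Fr w A' U')].
  have : u = b \/ P u.
    apply: (path_closure _ _ cb).
    + move=> z /andP[/andP[_ zU] bz].
      rewrite /P /= orbC; case zN: (z \in N); first by rewrite orbT.
      have zU' : z \in U' by rewrite inE zN zU.
      case: (eqVneq b a) => [eba|nba].
        by move: zN; rewrite /N ?inE zU -eba bz.
      rewrite orbF inE zU' /=; apply/exists_inP; exists b.
        by rewrite !inE nba bA.
      apply: connect1; rewrite /rAU zU' bz !andbT inE.
      by rewrite !inE nba bA.
    + move=> z z' Pz /andP[/andP[_ z'U] zz'].
      rewrite /P /= orbC; case z'N: (z' \in N); first by rewrite orbT.
      have z'U' : z' \in U' by rewrite inE z'N z'U.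
      rewrite orbF inE z'U' /=.
      case/orP: Pz => [zN|].
        apply/exists_inP; exists z; first by rewrite finset.in_setU zN orbT.
        by apply: connect1; rewrite /rAU z'U' zz' !andbT !finset.in_setU zN orbT.
      rewrite inE => /andP[zU' /exists_inP[b' b'A cb']].
      apply/exists_inP; exists b' => //.
      apply: (connect_trans cb'); apply: connect1.
      by rewrite /rAU z'U' zz' !andbT inE zU' orbT.
  by case => // Pu; rewrite inE.
- rewrite inE => /orP[uN|].
  + have uU : u \in U by move: uN; rewrite /N ?inE => /andP[].
    rewrite inE uU /=; apply/exists_inP; exists a => //.
    apply: connect1; rewrite /rAU uU inE aA /=.
    by move: uN; rewrite /N ?inE => /andP[].
  + rewrite inE => /andP[]; rewrite inE => /andP[_ uU] /exists_inP[b' b'A cb'].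
    rewrite inE uU /=.
    have cb : connect (rAU w A U) b' u by apply: connect_sub cb' => x y /sub_r; apply: connect1.
    move: b'A; rewrite inE => /orP[]; first by rewrite inE => /andP[_ b'A]; apply/exists_inP; exists b'.
    rewrite /N ?inE => /andP[b'U ab'].
    apply/exists_inP; exists a => //.
    apply: connect_trans cb; apply: connect1.
    by rewrite /rAU b'U inE aA ab'.
Qed.

Lemma card_Fr_split w a A U : a \in A -> [disjoint A & U] ->
  #|Fr w A U| = (#|Nb w a U| + #|Fr w (A :\ a :|: Nb w a U) (U :\: Nb w a U)|)%N.
Proof.
move=> aA dAU; rewrite (Fr_split w aA dAU) cardsU.
suff -> : Nb w a U :&: Fr w (A :\ a :|: Nb w a U) (U :\: Nb w a U) = finset.set0 by rewrite cards0 subn0.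
apply/setP => u; rewrite !inE.
by case: (u \in U) (adj w a u) => [] [].
Qed.

Lemma cluster_sub w v : open_cluster w v \subset v |: Fr w [set v] (~: [set v]).
Proof.
apply/fintype.subsetP => j; rewrite inE => cj.
pose P := [pred z | z \in v |: Fr w [set v] (~: [set v])].
have h1 : forall z, adj w v z -> P z.
  move=> z vz; rewrite /P /= !inE; case: eqVneq => //= zv.
  apply/exists_inP; exists v; first by rewrite inE.
  by apply: connect1; rewrite /rAU !inE zv eqxx vz.
have h2 : forall z z', P z -> adj w z z' -> P z'.
  move=> z z'; rewrite /P /= !inE => /orP[/eqP ->|].
    move=> vz; case: eqVneq => //= z'v.
    apply/exists_inP; exists v; first by rewrite inE.
    by apply: connect1; rewrite /rAU !inE z'v eqxx vz.
  move=> /andP[zv /exists_inP[b bv cb]] zz'.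
  case: eqVneq => //= z'v; apply/exists_inP; exists b => //.
  apply: (connect_trans cb); apply: connect1.
  by rewrite /rAU !inE z'v zv orbT zz'.
case: (path_closure h1 h2 cj) => [->|//]; by rewrite setU11.
Qed.

Definition ends_match (e : edge n) (i j : 'I_n) :=
  (((val e).1 == i) && ((val e).2 == j)) || (((val e).1 == j) && ((val e).2 == i)).

Lemma adj_eq w w' i j : (forall e, ends_match e i j -> w e = w' e) ->
  adj w i j = adj w' i j.
Proof.
move=> h; rewrite /adj; apply: eq_existsb => e.
case E: (ends_match e i j); rewrite /ends_match in E; rewrite E ?andbT ?andbF //.
exact: h.
Qed.

End Graph.


Section Rec.
Variables (R : realType) (n : nat) (p : edge n -> R).
Hypothesis Hp : forall e, 0 <= p e <= 1.

Definition incd (a : 'I_n) (e : edge n) := ((val e).1 == a) || ((val e).2 == a).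

Lemma Nb_dep a U (w w' : config n) : (forall e, incd a e -> w e = w' e) ->
  Nb w a U = Nb w' a U.
Proof.
move=> h; apply/setP => u; rewrite !inE (@adj_eq n w w') // => e.
rewrite /ends_match => /orP[] /andP[/eqP ea /eqP eu]; apply: h; by rewrite /incd ?ea ?eu eqxx ?orbT.
Qed.

Lemma Fr_dep a A U (w w' : config n) : a \notin A :|: U ->
  (forall e, ~~ incd a e -> w e = w' e) -> Fr w A U = Fr w' A U.
Proof.
move=> aAU h.
have E : rAU w A U =2 rAU w' A U.
  move=> x y; rewrite /rAU.
  case xAU: (x \in A :|: U) => //; case yU: (y \in U) => //=.
  have xa : x != a by apply: contraNneq aAU => <-.
  have ya : y != a.
    by apply: contraNneq aAU => <-; rewrite finset.in_setU yU orbT.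
  apply: adj_eq => e; rewrite /ends_match => /orP[] /andP[/eqP ex /eqP ey];
  apply: h; rewrite /incd ex ey negb_or ?xa ?ya //.
by apply/setP => u; rewrite !inE; under eq_existsb => b do rewrite (eq_connect E).
Qed.

Lemma rec_bound (s h : R) : 0 <= s -> 1 <= h ->
  (forall a (U : {set 'I_n}), a \notin U -> Exp p (fun w => (s * h) ^+ #|Nb w a U|) <= h) ->
  forall A U : {set 'I_n}, [disjoint A & U] -> Exp p (fun w => s ^+ #|Fr w A U|) <= h ^+ #|A|.
Proof.
move=> s0 h1 Hstep A U.
have h0 : 0 <= h by apply: le_trans h1.
suff: forall k (A U : {set 'I_n}), (#|A| + 2 * #|U| < k)%N -> [disjoint A & U] ->
   Exp p (fun w => s ^+ #|Fr w A U|) <= h ^+ #|A| by apply.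
elim => [//|k IH] {}A {}U hk dAU.
case: (set_0Vmem A) => [A0 | [a aA]].
  rewrite A0 cards0 expr0.
  have -> : (fun w => s ^+ #|Fr w finset.set0 U|) = (fun _ => 1).
    apply: funext => w; suff -> : Fr w finset.set0 U = finset.set0 by rewrite cards0.
    apply/setP => u; rewrite !inE; apply/negbTE; apply/negP => /andP[_ /exists_inP[b]].
    by rewrite inE.
  by rewrite Exp1.
have aU : a \notin U by rewrite (disjointFr dAU aA).
pose ind (N0 : {set 'I_n}) (w : config n) : R := (Nb w a U == N0)%:R.
pose A' (N0 : {set 'I_n}) := A :\ a :|: N0.
pose U' (N0 : {set 'I_n}) := U :\: N0.
pose m := #|A|.-1.
have Hpt : forall w, s ^+ #|Fr w A U| =
   \sum_(N0 : {set 'I_n}) ind N0 w * (s ^+ #|N0| * s ^+ #|Fr w (A' N0) (U' N0)|).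
  move=> w; rewrite (bigD1 (Nb w a U)) //= big1 ?addr0.
    by rewrite /ind eqxx mul1r -exprD -card_Fr_split.
  by move=> N0 /negbTE; rewrite /ind eq_sym => ->; rewrite mul0r.
have Hpt2 : forall w, h ^+ m * (s * h) ^+ #|Nb w a U| =
   \sum_(N0 : {set 'I_n}) ind N0 w * (s ^+ #|N0| * h ^+ (m + #|N0|)).
  move=> w; rewrite (bigD1 (Nb w a U)) //= big1 ?addr0.
    by rewrite /ind eqxx mul1r exprD exprMn mulrCA.
  by move=> N0 /negbTE; rewrite /ind eq_sym => ->; rewrite mul0r.
have -> : (fun w => s ^+ #|Fr w A U|) = (fun w => \sum_(N0 : {set 'I_n}) ind N0 w * (s ^+ #|N0| * s ^+ #|Fr w (A' N0) (U' N0)|)).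
  by apply: funext => w; rewrite Hpt.
rewrite Exp_sum.
apply: (@le_trans _ _ (\sum_(N0 : {set 'I_n}) Exp p (fun w => ind N0 w * (s ^+ #|N0| * h ^+ (m + #|N0|))))).
  apply: ler_sum => N0 _.
  case: (boolP (N0 \subset U)) => N0U; last first.
    apply: ler_Exp => // w.
    have -> : ind N0 w = 0.
      rewrite /ind; case: eqP => // E; move: N0U; rewrite -E.
      by rewrite Nb_sub.
    by rewrite !mul0r.
  rewrite (@Exp_indep _ _ p (incd a)); last first.
  - move=> w w' hw; congr (_ * _); congr (_ ^+ _); congr #|_|.
    have := @Fr_dep a (A' N0) (U' N0) w w'. move=> HH. rewrite HH //.
    rewrite /A' /U' /= !finset.in_setU !inE eqxx /= (negbTE aU) andbF orbF.
    by apply/negP => aN0; move: (fintype.subsetP N0U a aN0); rewrite (negbTE aU).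
  - by move=> w w' hw; rewrite /ind (Nb_dep U hw).
  rewrite [X in _ <= X](_ : _ = Exp p (ind N0) * (s ^+ #|N0| * h ^+ (m + #|N0|))); last first.
    by rewrite [RHS]mulrC -ExpZ; congr Exp; apply: funext => w; rewrite mulrC.
  apply: ler_wpM2l; first by apply: Exp_ge0 => // w; rewrite /ind ler0n.
  rewrite ExpZ; apply: ler_wpM2l; first by rewrite exprn_ge0.
  have cN0 : (#|N0| <= #|U|)%N by apply: subset_leq_card.
  have cA : #|A| = (#|A :\ a| + 1)%N by rewrite (cardsD1 a A) aA addnC.
  have cA' : (#|A' N0| <= #|A :\ a| + #|N0|)%N by rewrite /A' cardsU leq_subr.
  have cU' : #|U' N0| = (#|U| - #|N0|)%N.
    by rewrite /U' cardsD (finset.setIidPr N0U).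
  apply: (@le_trans _ _ (h ^+ #|A' N0|)).
    apply: IH.
      rewrite cU'. lia.
    rewrite -setI_eq0; apply/eqP/setP => x; rewrite /A' /U' !inE.
    case xN: (x \in N0); rewrite ?andbF //=.
    case xU: (x \in U); rewrite ?andbF //=.
    by rewrite (disjointFl dAU xU) andbF.
  by apply: ler_weXn2l => //; rewrite /m cA addn1 /=.
rewrite -Exp_sum.
have -> : (fun w => \sum_(N0 : {set 'I_n}) ind N0 w * (s ^+ #|N0| * h ^+ (m + #|N0|)))
   = (fun w => h ^+ m * (s * h) ^+ #|Nb w a U|).
  by apply: funext => w; rewrite Hpt2.
rewrite ExpZ.
have -> : h ^+ #|A| = h ^+ m * h.
  by rewrite -exprSr /m prednK //; apply/card_gt0P; exists a.
by apply: ler_wpM2l; [rewrite exprn_ge0 | apply: Hstep].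
Qed.

End Rec.


Section Step.
Variables (n : nat).

Definition oth (a : 'I_n) (e : edge n) := if (val e).1 == a then (val e).2 else (val e).1.

Lemma oth_inj a : {in [pred e | incd a e] &, injective (oth a)}.
Proof.
move=> e1 e2; rewrite !inE /incd /oth => i1 i2 E; apply: val_inj.
have h1 := valP e1; have h2 := valP e2.
move: (val e1) (val e2) h1 h2 i1 i2 E => [x1 y1] [x2 y2] /= h1 h2.
case: (eqVneq x1 a) => [ex1|hx1] /= i1; case: (eqVneq x2 a) => [ex2|hx2] /= i2 E.
- by rewrite ex1 ex2 E.
- move: h1 h2; rewrite ex1 E (eqP i2) => h1 h2.
  by have := ltn_trans h1 h2; rewrite ltnn.
- move: h1 h2; rewrite (eqP i1) ex2 -E => h1 h2.
  by have := ltn_trans h1 h2; rewrite ltnn.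
- by rewrite E (eqP i1) (eqP i2).
Qed.

Definition EA a (U : {set 'I_n}) := [set e : edge n | incd a e && (oth a e \in U)].

Lemma card_Nb (w : config n) a (U : {set 'I_n}) : a \notin U ->
  #|Nb w a U| = #|[set e in EA a U | w e]|.
Proof.
move=> aU.
have inj : {in [set e in EA a U | w e] &, injective (oth a)}.
  move=> e1 e2; rewrite !inE => /andP[/andP[i1 _] _] /andP[/andP[i2 _] _].
  exact: oth_inj.
rewrite -(card_in_imset inj); apply: eq_card => u; apply/idP/idP.
- rewrite inE => /andP[uU /existsP[e /andP[we em]]].
  apply/imsetP; exists e.
    rewrite !inE we andbT.
    move: em; rewrite /incd /oth; case/orP => /andP[/eqP -> /eqP ->]; rewrite eqxx //=.
    rewrite orbT /=; case: eqVneq => [ua|//]; by rewrite ua (negbTE aU) in uU.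
  move: em; rewrite /oth; case/orP => /andP[/eqP -> /eqP ->]; rewrite ?eqxx //.
  by case: eqVneq => // ua; rewrite ua (negbTE aU) in uU.
- move/imsetP => [e]; rewrite !inE => /andP[/andP[ie oU] we] ->.
  rewrite oU /=; apply/existsP; exists e; rewrite we /=.
  move: ie; rewrite /incd /oth.
  case: eqVneq => [-> _|ha /= /eqP ->]; by rewrite !eqxx ?orbT.
Qed.

Lemma card_EA a (U : {set 'I_n}) : (#|EA a U| <= n)%N.
Proof.
have inj : {in EA a U &, injective (oth a)}.
  by move=> e1 e2; rewrite !inE => /andP[i1 _] /andP[i2 _]; exact: oth_inj.
rewrite -(card_in_imset inj).
by apply: leq_trans (max_card _) _; rewrite card_ord.
Qed.

End Step.


Lemma step_bound (R : realType) n (p : edge n -> R) (Hp : forall e, 0 <= p e <= 1)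
  a (U : {set 'I_n}) (t q : R) :
  a \notin U -> 1 <= t -> 0 <= q -> (forall e, p e <= q) ->
  Exp p (fun w => t ^+ #|Nb w a U|) <= expR (q * (t - 1)) ^+ n.
Proof.
move=> aU t1 q0 hq.
have E : (fun w => t ^+ #|Nb w a U|) =
    (fun w => \prod_e (if (e \in EA a U) && w e then t else 1)).
  apply: funext => w; rewrite card_Nb // -prodr_const big_mkcond /=.
  by apply: eq_bigr => e _; rewrite inE.
rewrite E (Exp_prod p (fun e b => if (e \in EA a U) && b then t else 1)).
set x := expR (q * (t - 1)).
have x1 : 1 <= x.
  by apply: le_trans (expR_ge1Dx _); rewrite lerDl mulr_ge0 ?subr_ge0.
apply: (@le_trans _ _ (\prod_e (if e \in EA a U then x else 1))).
  apply: ler_prod => e _; have /andP[p0 p1] := Hp e.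
  case: (e \in EA a U) => /=; last by rewrite !mulr1 subrKC lexx ler01.
  rewrite mulr1; apply/andP; split.
    by rewrite addr_ge0 ?subr_ge0 // mulr_ge0 // (le_trans ler01 t1).
  apply: le_trans (expR_ge1Dx _).
  have -> : p e * t + (1 - p e) = 1 + p e * (t - 1) by ring.
  by rewrite lerD2l ler_wpM2r ?subr_ge0.
rewrite -big_mkcond prodr_const.
by apply: ler_weXn2l => //; apply: card_EA.
Qed.


Lemma expR_ge1 (R : realType) (x : R) : 0 <= x -> 1 <= expR x.
Proof. by move=> x0; apply: le_trans (expR_ge1Dx _); rewrite lerDl. Qed.

Lemma Prob_Exp (R : realType) n (p : edge n -> R) (A : pred (config n)) :
  Prob p A = Exp p (fun w => (A w)%:R).
Proof.
rewrite /Prob /Exp big_mkcond /=; apply: eq_bigr => w _.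
by case: (A w); rewrite ?mulr1 ?mulr0.
Qed.

Lemma ln_le_sub1 (R : realType) (c : R) : 0 < c -> ln c <= c - 1.
Proof.
move=> c0; have := @le_ln1Dx R (c - 1).
rewrite (_ : 1 + (c - 1) = c); last by ring.
by apply; lra.
Qed.

Lemma fixed_n (R : realType) n (p : edge n -> R) (Hp : forall e, 0 <= p e <= 1)
  (c M d : R) : (0 < n)%N -> 0 < c <= 1 -> (forall e, p e <= c / n%:R) ->
  d = c - 1 - ln c ->
  1 - n%:R * expR d * expR (- (d * M * ln (n%:R : R))) * expR (1 - c) <=
  Prob p (fun w : config n =>
        [forall j : 'I_n, (#|open_cluster w j|%:R <= M * ln (n%:R : R))]).
Proof.
move=> n0 /andP[c0 c1] hp hd.
have d0 : 0 <= d by rewrite hd; have := ln_le_sub1 c0; lra.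
set s := expR d; set h := expR (1 - c).
have s0 : 0 <= s by rewrite ltW ?expR_gt0.
have h1 : 1 <= h by rewrite expR_ge1 // subr_ge0.
have nR0 : n%:R != 0 :> R by rewrite pnatr_eq0 -lt0n.
have Hstep : forall a (U : {set 'I_n}), a \notin U ->
    Exp p (fun w => (s * h) ^+ #|Nb w a U|) <= h.
  move=> a U aU.
  have sh : s * h = c^-1.
    rewrite /s /h -expRD hd (_ : _ + _ = - ln c); last by ring.
    by rewrite expRN lnK // posrE.
  have t1 : 1 <= s * h by rewrite sh invr_ge1 // unitfE gt_eqF.
  have q0 : 0 <= c / n%:R by rewrite divr_ge0 ?ler0n ?ltW.
  apply: le_trans (step_bound Hp aU t1 q0 hp) _.
  rewrite -expRM_natl /h sh ler_expR.
  rewrite le_eqVlt; apply/orP; left; apply/eqP; field.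
  by rewrite nR0 gt_eqF.
have Hv : forall v : 'I_n, Exp p (fun w => s ^+ #|Fr w [set v] (~: [set v])|) <= h.
  move=> v; have := @rec_bound R n p Hp s h s0 h1 Hstep [set v] (~: [set v]).
  by rewrite cards1 expr1; apply; rewrite disjoints1 !inE eqxx.
set L := M * ln (n%:R : R).
set K := expR d * expR (- (d * M * ln (n%:R : R))).
have K0 : 0 <= K by rewrite mulr_ge0 // ltW // expR_gt0.
have Hind : forall w (v : 'I_n), ((~~ (#|open_cluster w v|%:R <= L)))%:R
     <= K * s ^+ #|Fr w [set v] (~: [set v])|.
  move=> w v; case: (boolP (#|open_cluster w v|%:R <= L)) => hv /=.
    by rewrite mulr_ge0 // exprn_ge0.
  rewrite -ltNge in hv.
  have cl : (#|open_cluster w v| <= 1 + #|Fr w [set v] (~: [set v])|)%N.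
    apply: leq_trans (subset_leq_card (cluster_sub w v)) _.
    by rewrite cardsU1; case: (v \notin _).
  set m := #|Fr w [set v] (~: [set v])| in cl *.
  have clR : #|open_cluster w v|%:R <= 1 + m%:R :> R.
    by have := cl; rewrite -(ler_nat R) natrD => H; exact: H.
  rewrite /K /s -expRM_natl -!expRD expR_ge1 //.
  have -> : d + - (d * M * ln (n%:R : R)) + m%:R * d = d * (1 + m%:R - L) by rewrite /L; ring.
  by rewrite mulr_ge0 // subr_ge0 ltW // (lt_le_trans hv clR).
rewrite Prob_Exp.
have Hg : forall w : config n, ([forall j : 'I_n, (#|open_cluster w j|%:R <= L)])%:R
   = 1 - (~~ [forall j : 'I_n, (#|open_cluster w j|%:R <= L)])%:R :> R.
  by move=> w; case: [forall j, _]; rewrite /= ?subr0 ?subrr.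
rewrite (_ : (fun w => _) = (fun w => 1 - (~~ [forall j : 'I_n, (#|open_cluster w j|%:R <= L)])%:R)); last first.
  by apply: funext => w; rewrite Hg.
have ExpB : forall f, Exp p (fun w => 1 - f w) = 1 - Exp p f.
  move=> f; rewrite /Exp -[X in X - _](Exp1 p) /Exp -sumrB.
  by apply: eq_bigr => w _; rewrite mulrBr mulr1.
rewrite ExpB lerD2l lerN2.
apply: (@le_trans _ _ (Exp p (fun w => \sum_(v : 'I_n) K * s ^+ #|Fr w [set v] (~: [set v])|))).
  apply: ler_Exp => // w.
  case: (boolP [forall j, _]) => hall /=; first by rewrite sumr_ge0 // => v _; rewrite mulr_ge0 // exprn_ge0.
  have /existsP[v hv] : [exists j : 'I_n, ~~ (#|open_cluster w j|%:R <= L)].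
    by rewrite -negb_forall.
  rewrite (bigD1 v) //=.
  apply: (@le_trans _ _ (K * s ^+ #|Fr w [set v] (~: [set v])|)).
    by have := Hind w v; rewrite hv.
  by rewrite lerDl sumr_ge0 // => u _; rewrite mulr_ge0 // exprn_ge0.
rewrite Exp_sum.
apply: (@le_trans _ _ (\sum_(v : 'I_n) K * h)).
  apply: ler_sum => v _; rewrite ExpZ; exact: ler_wpM2l.
by rewrite sumr_const card_ord -[X in X <= _]mulr_natl /K /h !mulrA.
Qed.

End Aux.
Import Aux.
Local Open Scope classical_set_scope.
Local Open Scope ring_scope.

Theorem theorem1 (R : realType) (C : R) (alpha : nat -> R)
  (p : forall n : nat, edge n -> R) (M theta : R) :
  0 < C -> C < 1 ->
  (forall n, 0 <= alpha n) -> alpha @ \oo --> 0 ->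
  (forall n (e : edge n), 0 <= p n e <= 1) ->
  (forall n (e : edge n), (C - alpha n) / n%:R <= p n e <= (C + alpha n) / n%:R) ->
  1 / (C - 1 - ln C) < M ->
  theta < Num.min (M * (C - 1 - ln C) - 1) 1 ->
  exists L1 : R, 0 < L1 /\
    forall n : nat, L1 <= n%:R ->
      Prob (p n) (fun w : config n =>
        [forall j : 'I_n, (#|open_cluster w j|%:R <= M * ln (n%:R : R))]) >=
      1 - 1 / (n%:R `^ theta).
Proof.
move=> C0 C1 a0 acvg Hp Hpb HM Hth.
set del := C - 1 - ln C.
have lnC : ln C < C - 1.
  have := @expR_gt1Dx R (ln C); rewrite lnK ?posrE // => H.
  suff : 1 + ln C < C by lra.
  by apply: H; rewrite ln_eq0 // lt_eqF.
have del0 : 0 < del by rewrite /del; lra.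
have M0 : 0 < M by apply: lt_trans HM; rewrite divr_gt0.
have hg : theta < M * del - 1 by move: Hth; rewrite lt_min => /andP[].
set g := M * del - 1 - theta.
have g0 : 0 < g by rewrite /g; lra.
set eps := Num.min ((1 - C) / 2) (g * C / (2 * M)).
have eps0 : 0 < eps by rewrite lt_min !divr_gt0 ?mulr_gt0 //; lra.
have eps1 : eps <= (1 - C) / 2 by rewrite ge_min lexx.
have eps2 : eps <= g * C / (2 * M) by rewrite ge_min lexx orbT.
set c := C + eps.
have c0 : 0 < c by rewrite /c; lra.
have c1 : c <= 1 by rewrite /c; lra.
set d := c - 1 - ln c.
set u := eps / C.
have lnc : ln c <= ln C + u.
  have -> : c = C * (1 + u) by rewrite /c /u; field; rewrite gt_eqF.
  have u0 : 0 <= u by rewrite /u divr_ge0 // ltW.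
  rewrite lnM ?posrE //; last by lra.
  by rewrite lerD2l le_ln1Dx //; lra.
have e2 : u <= g / (2 * M).
  rewrite /u ler_pdivrMr //; apply: le_trans eps2 _.
  by rewrite le_eqVlt; apply/orP; left; apply/eqP; field; rewrite !gt_eqF.
have e3 : M * u <= g / 2.
  apply: le_trans (ler_wpM2l (ltW M0) e2) _.
  by rewrite le_eqVlt; apply/orP; left; apply/eqP; field; rewrite gt_eqF.
have dd : del - u <= d by rewrite /d /del /c; lra.
have Md : M * del - M * u <= M * d by rewrite -mulrBr ler_wpM2l // ltW.
set eta := g / 2.
have eta0 : 0 < eta by rewrite /eta; lra.
have Mdeta : eta <= M * d - 1 - theta.
  have : g = M * del - 1 - theta by []. have : eta = g / 2 by []. lra.
set K0 := d + 1 - c.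
have /cvgrPdist_lt /(_ eps eps0) [N0 _ HN0] := acvg.
pose N2 := Num.Def.archi_bound (expR (K0 / eta)).
have HN2 : expR (K0 / eta) < N2%:R by apply: archi_boundP; rewrite ltW ?expR_gt0.
exists (maxn (maxn N0 N2) 1)%:R; split.
  by rewrite ltr0n leq_max orbT.
move=> n hn.
have : (maxn (maxn N0 N2) 1 <= n)%N by rewrite -(ler_nat R).
rewrite !geq_max => /andP[/andP[nN0 nN2] n1].
have an : alpha n <= eps.
  have := HN0 n nN0; rewrite /= sub0r normrN => H.
  by apply: le_trans (ltW H); apply: ler_norm.
have hp : forall e, p n e <= c / n%:R.
  move=> e; have /andP[_ H] := Hpb n e; apply: le_trans H _.
  by rewrite ler_wpM2r ?invr_ge0 ?ler0n // lerD2l.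
apply: le_trans (@fixed_n R n (p n) (Hp n) c M d n1 _ hp erefl); last by rewrite c0 c1.
rewrite lerD2l lerN2.
have n0 : 0 < n%:R :> R by rewrite ltr0n.
set l := ln (n%:R : R).
have l0 : 0 <= l by rewrite /l ln_ge0 // ler1n.
have lK : K0 <= eta * l.
  have : K0 / eta <= l.
    rewrite /l -(expRK (K0 / eta)) ler_ln ?posrE ?expR_gt0 //.
    by apply: le_trans (ltW HN2) _; rewrite ler_nat.
  by rewrite ler_pdivrMr // mulrC.
have P1 : eta * l <= (M * d - 1 - theta) * l by rewrite ler_wpM2r.
rewrite /powR gt_eqF // div1r -expRN.
rewrite -[X in X * _ * _ * _](lnK (x := n%:R)) ?posrE // -/l -!expRD ler_expR.
rewrite /K0 in lK; lra.
Qed.
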